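(* Let $n\ge1$, $t_1<\dots<t_n$, $p_0,\dots,p_n>0$, $q_k=p_k^{-1/2}$, and let $a_k^\pm,b_k^\pm$ be the connection coefficients defined in the context. Then for every $\lambda\in(0,\infty)$, $$\frac{|b_0^+(\lambda)|^2}{q_0^2}+\frac{1}{q_0q_n}=\frac{|a_0^+(\lambda)|^2}{q_0^2}=\frac{|b_n^-(\lambda)|^2}{q_n^2}=\frac{1}{q_0q_n}+\frac{|a_n^-(\lambda)|^2}{q_n^2}.$$
   Context: For $z\in\mathbb{C}\setminus(-\infty,0]$, $\sqrt z$ is the principal square root. For $1\le k\le n$ let $$L_k(z)=\frac12\begin{bmatrix}\left(1+\frac{q_k}{q_{k-1}}\right)e^{it_k(q_{k-1}-q_k)\sqrt z} & \left(1-\frac{q_k}{q_{k-1}}\right)e^{-it_k(q_{k-1}+q_k)\sqrt z}\\ \left(1-\frac{q_k}{q_{k-1}}\right)e^{it_k(q_{k-1}+q_k)\sqrt z} & \left(1+\frac{q_k}{q_{k-1}}\right)e^{-it_k(q_{k-1}-q_k)\sqrt z}\end{bmatrix},\qquad R_k(z)=L_k(z)^{-1}.$$ The connection coefficients are $a_n^+=1$, $b_n^+=0$, $(a_l^+,b_l^+)^T=R_{l+1}(z)(a_{l+1}^+,b_{l+1}^+)^T$ for $l=n-1,\dots,0$; and $a_0^-=0$, $b_0^-=1$, $(a_j^-,b_j^-)^T=L_j(z)(a_{j-1}^-,b_{j-1}^-)^T$ for $j=1,\dots,n$. *)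

(* Defs.v *)
From Stdlib Require Import Reals.
From Coquelicot Require Import Coquelicot.
Open Scope R_scope.

Definition cis (x : R) : C := (cos x, sin x).

(* 2x2 complex matrices ((m11, m12), (m21, m22)) and column vectors (v1, v2) *)
Definition M2 := ((C * C) * (C * C))%type.
Definition V2 := (C * C)%type.

Definition mv (M : M2) (v : V2) : V2 :=
  let '((m11, m12), (m21, m22)) := M in
  let '(v1, v2) := v in
  (Cplus (Cmult m11 v1) (Cmult m12 v2), Cplus (Cmult m21 v1) (Cmult m22 v2)).

Definition det2 (M : M2) : C :=
  let '((m11, m12), (m21, m22)) := M in Cminus (Cmult m11 m22) (Cmult m12 m21).

Definition inv2 (M : M2) : M2 :=
  let '((m11, m12), (m21, m22)) := M in
  let d := Cinv (det2 M) in
  ((Cmult d m22, Cmult d (Copp m12)), (Cmult d (Copp m21), Cmult d m11)).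

Definition qq (p : nat -> R) (k : nat) : R := / sqrt (p k).

(* L_k(lambda) for real lambda > 0: principal sqrt lambda is the real sqrt,
   and e^{i x} = cis x. *)
Definition Lmat (t p : nat -> R) (k : nat) (lam : R) : M2 :=
  let q0 := qq p (k - 1) in
  let q1 := qq p k in
  let s := sqrt lam in
  let c1 := RtoC ((1 + q1 / q0) / 2) in
  let c2 := RtoC ((1 - q1 / q0) / 2) in
  ((Cmult c1 (cis (t k * (q0 - q1) * s)), Cmult c2 (cis (- (t k * (q0 + q1) * s)))),
   (Cmult c2 (cis (t k * (q0 + q1) * s)), Cmult c1 (cis (- (t k * (q0 - q1) * s))))).

Definition Rmat (t p : nat -> R) (k : nat) (lam : R) : M2 := inv2 (Lmat t p k lam).

(* plus_vec n j = (a^+_{n-j}, b^+_{n-j}) *)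
Fixpoint plus_vec (t p : nat -> R) (n : nat) (lam : R) (j : nat) : V2 :=
  match j with
  | O => (RtoC 1, RtoC 0)
  | S j' => mv (Rmat t p (n - j') lam) (plus_vec t p n lam j')
  end.

Fixpoint minus_vec (t p : nat -> R) (lam : R) (j : nat) : V2 :=
  match j with
  | O => (RtoC 0, RtoC 1)
  | S j' => mv (Lmat t p (S j') lam) (minus_vec t p lam j')
  end.

Definition a_plus t p n lam l : C := fst (plus_vec t p n lam (n - l)).
Definition b_plus t p n lam l : C := snd (plus_vec t p n lam (n - l)).
Definition a_minus t p lam j : C := fst (minus_vec t p lam j).
Definition b_minus t p lam j : C := snd (minus_vec t p lam j).

(* Main.v *)
Require Import Defs.
From Stdlib Require Import Reals Lra Lia.
From Coquelicot Require Import Coquelicot.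
Open Scope R_scope.

Definition om (u w : V2) : C :=
  Cminus (Cmult (fst u) (snd w)) (Cmult (snd u) (fst w)).
Definition JJ (v : V2) : V2 := (Cconj (snd v), Cconj (fst v)).
Definition NN (v : V2) : R :=
  (fst (fst v))^2 + (snd (fst v))^2 - (fst (snd v))^2 - (snd (snd v))^2.

Lemma om_inv2 M w u : om (mv (inv2 M) w) u = Cmult (Cinv (det2 M)) (om w (mv M u)).
Proof.
  destruct M as [[m11 m12] [m21 m22]]. unfold inv2.
  generalize (Cinv (det2 ((m11, m12), (m21, m22)))) as d. intro d.
  destruct w as [w1 w2], u as [u1 u2].
  destruct m11, m12, m21, m22, w1, w2, u1, u2, d.
  unfold om, mv, Cminus, Cmult, Cplus, Copp; cbn [fst snd].
  f_equal; ring.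
Qed.

Lemma cs x : cos x ^2 + sin x ^2 = 1.
Proof. rewrite <- (sin2_cos2 x); unfold Rsqr; ring. Qed.

Lemma Lmat_form t p m lam : exists c1 c2 a b,
  Lmat t p (S m) lam =
  ((Cmult (RtoC c1) (cos a, sin a), Cmult (RtoC c2) (cos b, - sin b)),
   (Cmult (RtoC c2) (cos b, sin b), Cmult (RtoC c1) (cos a, - sin a))) /\
  c1 = (1 + qq p (S m) / qq p m) / 2 /\ c2 = (1 - qq p (S m) / qq p m) / 2.
Proof.
  unfold Lmat. replace (S m - 1)%nat with m by lia.
  exists ((1 + qq p (S m) / qq p m) / 2), ((1 - qq p (S m) / qq p m) / 2),
    (t (S m) * (qq p m - qq p (S m)) * sqrt lam),
    (t (S m) * (qq p m + qq p (S m)) * sqrt lam).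
  split; [|split; reflexivity].
  unfold cis. rewrite !cos_neg, !sin_neg. reflexivity.
Qed.

Lemma J_L t p m lam v :
  JJ (mv (Lmat t p (S m) lam) v) = mv (Lmat t p (S m) lam) (JJ v).
Proof.
  destruct (Lmat_form t p m lam) as (c1 & c2 & a & b & -> & _ & _).
  destruct v as [[x1 x2] [y1 y2]].
  unfold JJ, mv, Cconj, Cmult, Cplus, RtoC; cbn [fst snd]. f_equal; f_equal; ring.
Qed.

Lemma N_L t p m lam v :
  NN (mv (Lmat t p (S m) lam) v) = (qq p (S m) / qq p m) * NN v.
Proof.
  destruct (Lmat_form t p m lam) as (c1 & c2 & a & b & -> & H1 & H2).
  destruct v as [[x1 x2] [y1 y2]].
  transitivity ((c1^2 * (cos a ^2 + sin a ^2) - c2^2 * (cos b ^2 + sin b ^2)) *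
    NN ((x1, x2), (y1, y2))).
  - unfold NN, mv, Cmult, Cplus, RtoC; cbn [fst snd]. ring.
  - rewrite !cs. f_equal. subst. set (r := qq p (S m) / qq p m). field.
Qed.

Lemma det_L t p m lam : qq p m <> 0 -> qq p (S m) <> 0 ->
  Cinv (det2 (Lmat t p (S m) lam)) = RtoC (qq p m / qq p (S m)).
Proof.
  intros Hq Hq1.
  destruct (Lmat_form t p m lam) as (c1 & c2 & a & b & -> & H1 & H2).
  assert (E : det2 ((Cmult (RtoC c1) (cos a, sin a), Cmult (RtoC c2) (cos b, - sin b)),
   (Cmult (RtoC c2) (cos b, sin b), Cmult (RtoC c1) (cos a, - sin a)))
   = RtoC (c1^2 * (cos a ^2 + sin a ^2) - c2^2 * (cos b ^2 + sin b ^2))).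
  { unfold det2, Cminus, Cmult, Cplus, Copp, RtoC; cbn [fst snd]. f_equal; ring. }
  rewrite E. rewrite !cs.
  assert (E2 : c1 ^ 2 * 1 - c2 ^ 2 * 1 = qq p (S m) / qq p m) by (subst; set (r := qq p (S m) / qq p m); field).
  rewrite E2. rewrite H1 in *.
  assert (Hq' : qq p (S m) <> 0) by exact Hq1.
  unfold Cinv, RtoC; cbn [fst snd]. f_equal; field; auto.
Qed.

Lemma qq_pos p k : 0 < p k -> 0 < qq p k.
Proof. intro H. unfold qq. apply Rinv_0_lt_compat, sqrt_lt_R0, H. Qed.

Lemma Cscal k z : Cmult (RtoC k) z = (k * fst z, k * snd z).
Proof. destruct z. unfold Cmult, RtoC; cbn [fst snd]. f_equal; ring. Qed.

Lemma invF n t p lam (Hp : forall k, (k <= n)%nat -> 0 < p k) (f : V2 -> V2)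
  (Hf : forall m v, f (mv (Lmat t p (S m) lam) v) = mv (Lmat t p (S m) lam) (f v)) :
  forall j, (j <= n)%nat ->
  om (plus_vec t p n lam j) (f (minus_vec t p lam (n - j))) =
  Cmult (RtoC (qq p (n - j) / qq p n)) (om (plus_vec t p n lam 0) (f (minus_vec t p lam n))).
Proof.
  induction j as [|j IH]; intro Hj.
  - rewrite Nat.sub_0_r.
    assert (Hn : qq p n <> 0) by (apply Rgt_not_eq, qq_pos, Hp; lia).
    replace (qq p n / qq p n) with 1 by (field; auto).
    rewrite Cscal. destruct (om _ _). cbn [fst snd]. f_equal; ring.
  - set (m := (n - S j)%nat).
    assert (H : (n - j)%nat = S m) by (unfold m; lia).
    cbn [plus_vec]. rewrite H. rewrite H in IH.
    unfold Rmat. rewrite om_inv2.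
    assert (Hm : qq p m <> 0) by (apply Rgt_not_eq, qq_pos, Hp; unfold m; lia).
    assert (Hm1 : qq p (S m) <> 0) by (apply Rgt_not_eq, qq_pos, Hp; lia).
    assert (Hn : qq p n <> 0) by (apply Rgt_not_eq, qq_pos, Hp; lia).
    rewrite det_L by auto.
    rewrite <- Hf.
    change (mv (Lmat t p (S m) lam) (minus_vec t p lam m)) with (minus_vec t p lam (S m)).
    rewrite IH by lia.
    rewrite !Cscal. cbn [plus_vec fst snd].
    f_equal; field; auto.
Qed.

Lemma invN n t p lam (Hp : forall k, (k <= n)%nat -> 0 < p k) :
  forall l, (l <= n)%nat -> NN (minus_vec t p lam l) = - (qq p l / qq p 0).
Proof.
  assert (H0 : qq p 0 <> 0) by (apply Rgt_not_eq, qq_pos, Hp; lia).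
  induction l as [|l IH]; intro Hl.
  - cbn [minus_vec]. unfold NN, RtoC; cbn [fst snd]. field. auto.
  - cbn [minus_vec]. rewrite N_L, IH by lia.
    assert (Hl' : qq p l <> 0) by (apply Rgt_not_eq, qq_pos, Hp; lia).
    field. auto.
Qed.

Lemma Cmod_sq z : Cmod z ^ 2 = fst z ^ 2 + snd z ^ 2.
Proof. unfold Cmod. rewrite pow2_sqrt; [reflexivity|]. nra. Qed.

Theorem corollary3p5 (n : nat) (t p : nat -> R) :
  (1 <= n)%nat ->
  (forall k, (1 <= k)%nat -> (k < n)%nat -> t k < t (S k)) ->
  (forall k, (k <= n)%nat -> 0 < p k) ->
  forall lam : R, 0 < lam ->
    let q := qq p in
    Cmod (b_plus t p n lam 0) ^ 2 / q 0%nat ^ 2 + / (q 0%nat * q n)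
      = Cmod (a_plus t p n lam 0) ^ 2 / q 0%nat ^ 2 /\
    Cmod (a_plus t p n lam 0) ^ 2 / q 0%nat ^ 2
      = Cmod (b_minus t p lam n) ^ 2 / q n ^ 2 /\
    Cmod (b_minus t p lam n) ^ 2 / q n ^ 2
      = / (q 0%nat * q n) + Cmod (a_minus t p lam n) ^ 2 / q n ^ 2.
Proof.
  intros Hn _ Hp lam Hlam q.
  pose proof (invF n t p lam Hp (fun v => v) (fun m v => eq_refl) n (le_n n)) as H1.
  pose proof (invF n t p lam Hp JJ (fun m v => J_L t p m lam v) n (le_n n)) as H2.
  pose proof (invN n t p lam Hp n (le_n n)) as H3.
  rewrite Nat.sub_diag in H1, H2.
  assert (q0 : 0 < q 0%nat) by (apply qq_pos, Hp; lia).
  assert (qn : 0 < q n) by (apply qq_pos, Hp; lia).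
  unfold a_plus, b_plus, a_minus, b_minus. rewrite Nat.sub_0_r.
  fold q in H1, H2, H3.
  rewrite !Cmod_sq.
  destruct (plus_vec t p n lam n) as [[a1 a2] [b1 b2]].
  destruct (minus_vec t p lam n) as [[x1 x2] [y1 y2]].
  rewrite !Cscal in *. cbn [plus_vec minus_vec] in *.
  unfold om, JJ, NN, Cconj, Cminus, Cmult, Cplus, Copp, RtoC in *. cbn [fst snd] in *.
  injection H1; intros E1 E2. injection H2; intros E3 E4.
  cbn [fst snd].
  set (k := q 0%nat / q n) in *.
  replace (1 * y1 - 0 * y2 + - (0 * x1 - 0 * x2)) with y1 in E2 by ring.
  assert (Ha1 : a1 = k * y1) by (rewrite <- E2; ring).
  replace (1 * y2 + 0 * y1 + - (0 * x2 + 0 * x1)) with y2 in E1 by ring.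
  replace (1 * - x2 + 0 * x1 + - (0 * - y2 + 0 * y1)) with (- x2) in E3 by ring.
  replace (1 * x1 - 0 * - x2 + - (0 * y1 - 0 * - y2)) with x1 in E4 by ring.
  assert (Ha2 : a2 = k * y2) by (rewrite <- E1; ring).
  assert (Hb2 : b2 = k * x2) by (replace (k * x2) with (- (k * - x2)) by ring; rewrite <- E3; ring).
  assert (Hb1 : b1 = - (k * x1)) by (rewrite <- E4; ring).
  subst a1 a2 b1 b2.
  assert (Y : y1 ^ 2 + y2 ^ 2 = x1 ^ 2 + x2 ^ 2 + q n / q 0%nat) by lra.
  replace ((k * y1) ^ 2 + (k * y2) ^ 2) with (k ^ 2 * (y1 ^ 2 + y2 ^ 2)) by ring.
  replace ((- (k * x1)) ^ 2 + (k * x2) ^ 2) with (k ^ 2 * (x1 ^ 2 + x2 ^ 2)) by ring.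
  rewrite Y. unfold k.
  split; [|split]; field; lra.
Qed.
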